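(* Let $\mathbb{F}$, $\mathfrak g$, $\mathcal C$, $\mathcal C^{du}$, $M$ be as in the context, and assume the pair $\mathcal C,\mathcal C^{du}$ is good for integrating $\mathfrak g$. Let $V$ be an object of $\mathcal C$. Then every $M$-invariant subspace $U$ of $V$ which is closed in the Zariski topology of $V$ is $\mathfrak g$-invariant.
   Context: Let $\mathbb F$ be a field of characteristic $0$, $\mathfrak g$ a Lie algebra over $\mathbb F$. $\mathcal C$: full subcategory of $\mathfrak g$-modules closed under isomorphism and submodules, containing a direct sum and tensor product of any two objects and a one-dimensional trivial module, with only $0\in\mathfrak g$ acting trivially on all objects. $x_V$ = action. Category of duals: point-separating $V^{du}\subseteq V^*$ with $\phi\circ x_V\in V^{du}$ ($x\in\mathfrak g$), $\psi\circ\alpha\in V^{du}$ for morphisms $\alpha:V\to W$, $\psi\in W^{du}$, $(V\oplus W)^{du}=V^{du}\oplus W^{du}$, $V^{du}\otimes W^{du}\subseteq(V\otimes W)^{du}$. $End_{V^{du}}(V)=\{\varphi:\phi\circ\varphi\in V^{du}\ \forall\phi\}$. $Nat$: families $(m_V)_V$, $m_V\in End_{V^{du}}(V)$, commuting with all morphisms. $M=\{m\in Nat:m_{V\otimes W}=m_V\otimes m_W,\ m_{V_0}=id$ for trivial one-dimensional $V_0\}$, acting on $V$ by $m\cdot v=m_Vv$. $\mathbb F[M]=\{f_{\phi v}\}$, $f_{\phi v}(m)=\phi(m_Vv)$. $Lie(M)=\{x\in Nat:x_{V\otimes W}=x_V\otimes id+id\otimes x_W,\ x_{V_0}=0,\ \exists\,\delta_x:\mathbb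 F[M]\to\mathbb F$ with $\delta_x(f_{\phi v})=\phi(x_Vv)\}$. Identify $\mathfrak g$ with $\{(x_V)_V\}\subseteq Nat$; good for integrating means $\mathfrak g\subseteq Lie(M)$. The Zariski topology on $V$: closed sets are common zero sets of subsets of $\mathbb F[V]$, the algebra of functions on $V$ generated by $V^{du}$. *)

(* Defs.v *)
From HB Require Import structures.
From mathcomp Require Import all_boot all_order all_algebra.
Set Implicit Arguments. Unset Strict Implicit. Unset Printing Implicit Defensive.
Import GRing.Theory.
Local Open Scope ring_scope.

Section Defs.
Variable F : fieldType.

Definition lin (U V : lmodType F) (f : U -> V) : Prop :=
  forall (a : F) (u v : U), f (a *: u + v) = a *: f u + f v.

Definition linF (U : lmodType F) (f : U -> F) : Prop :=
  forall (a : F) (u v : U), f (a *: u + v) = a * f u + f v.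

Definition bilin (U V W : lmodType F) (b : U -> V -> W) : Prop :=
  (forall v, lin (fun u => b u v)) /\ (forall u, lin (b u)).

Record LieAlg := {
  lie_car :> lmodType F;
  lie_br : lie_car -> lie_car -> lie_car;
  lie_br_bilin : bilin lie_br;
  lie_br_alt : forall x, lie_br x x = 0;
  lie_jacobi : forall x y z,
    lie_br x (lie_br y z) + lie_br y (lie_br z x) + lie_br z (lie_br x y) = 0 }.

Variable g : LieAlg.

Record gmod := {
  gcar :> lmodType F;
  gact : g -> gcar -> gcar;
  gact_bilin : bilin gact;
  gact_br : forall x y v,
    gact (lie_br x y) v = gact x (gact y v) - gact y (gact x v) }.

Definition xV (V : gmod) (x : g) : V -> V := @gact V x.

Definition is_morph (V W : gmod) (a : V -> W) : Prop :=
  lin a /\ forall x v, a (gact x v) = gact x (a v).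

Definition is_iso (V W : gmod) (a : V -> W) : Prop :=
  is_morph a /\ exists b : W -> V, is_morph b /\ cancel a b /\ cancel b a.

Definition is_dsum (V W S : gmod) (i1 : V -> S) (i2 : W -> S)
    (p1 : S -> V) (p2 : S -> W) : Prop :=
  [/\ is_morph i1, is_morph i2, is_morph p1, is_morph p2 &
      [/\ cancel i1 p1, cancel i2 p2, (forall w, p1 (i2 w) = 0),
          (forall v, p2 (i1 v) = 0) & (forall s, i1 (p1 s) + i2 (p2 s) = s)]].

Definition is_tensor (V W T : gmod) (b : V -> W -> T) : Prop :=
  [/\ bilin b,
      (forall x v w, gact x (b v w) = b (gact x v) w + b v (gact x w)) &
      (forall (X : lmodType F) (f : V -> W -> X), bilin f ->
         (exists h : T -> X, lin h /\ forall v w, h (b v w) = f v w) /\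
         (forall h1 h2 : T -> X, lin h1 -> lin h2 ->
            (forall v w, h1 (b v w) = f v w) -> (forall v w, h2 (b v w) = f v w) ->
            forall t, h1 t = h2 t))].

Definition trivial1 (V0 : gmod) : Prop :=
  (exists e : V0, e != 0 /\ forall v : V0, exists c : F, v = c *: e) /\
  (forall x (v : V0), gact x v = 0).

Definition is_category (C : gmod -> Prop) : Prop :=
  [/\
      (forall (V W : gmod) (a : V -> W), C V -> is_iso a -> C W),
      (* closed under submodules (images of injective morphisms) *)
      (forall (V W : gmod) (a : W -> V), C V -> is_morph a -> injective a -> C W),
      (forall V W : gmod, C V -> C W -> exists (S : gmod) (i1 : V -> S) (i2 : W -> S) p1 p2,
          C S /\ is_dsum i1 i2 p1 p2),
      (forall V W : gmod, C V -> C W -> exists (T : gmod) (b : V -> W -> T), C T /\ is_tensor b) &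
      (
          (exists V0 : gmod, C V0 /\ trivial1 V0) /\
          (forall x : g, (forall V : gmod, C V -> forall v : V, gact x v = 0) -> x = 0))].

Definition subspace (V : lmodType F) (U : V -> Prop) : Prop :=
  U 0 /\ forall (a : F) u v, U u -> U v -> U (a *: u + v).

(* A category of duals: V^du is given by du V. *)
Definition is_duals (C : gmod -> Prop) (du : forall V : gmod, (V -> F) -> Prop) : Prop :=
  forall V : gmod, C V ->
  [/\
      (forall phi, du V phi -> linF phi) /\
        (du V (fun _ => 0) /\ forall (a : F) phi psi, du V phi -> du V psi ->
           du V (fun v => a * phi v + psi v)),
      (forall v : V, v != 0 -> exists phi, du V phi /\ phi v != 0),
      (forall phi x, du V phi -> du V (fun v => phi (gact x v))),
      (forall (W : gmod) (a : V -> W) psi, C W -> is_morph a -> du W psi ->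
          du V (fun v => psi (a v))) &
      forall W : gmod, C W ->
      (
          (forall (S : gmod) (i1 : V -> S) (i2 : W -> S) p1 p2, C S -> is_dsum i1 i2 p1 p2 ->
             forall chi : S -> F, linF chi ->
             (du S chi <-> (du V (fun v => chi (i1 v)) /\ du W (fun w => chi (i2 w))))) /\
          (forall (T : gmod) (b : V -> W -> T), C T -> is_tensor b ->
             forall phi psi (chi : T -> F), du V phi -> du W psi -> linF chi ->
             (forall v w, chi (b v w) = phi v * psi w) -> du T chi))].

Definition family := forall V : gmod, V -> V.

Definition End_du (du : forall V : gmod, (V -> F) -> Prop) (V : gmod) (f : V -> V) : Prop :=
  lin f /\ forall phi, du V phi -> du V (fun v => phi (f v)).

Definition Nat (C : gmod -> Prop) du (m : family) : Prop :=
  (forall V : gmod, C V -> End_du du (m V)) /\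
  (forall (V W : gmod) (a : V -> W), C V -> C W -> is_morph a ->
      forall v, a (m V v) = m W (a v)).

Definition inM (C : gmod -> Prop) du (m : family) : Prop :=
  [/\ Nat C du m,
      (forall (V W T : gmod) (b : V -> W -> T), C V -> C W -> C T -> is_tensor b ->
          forall v w, m T (b v w) = b (m V v) (m W w)) &
      (forall V0 : gmod, C V0 -> trivial1 V0 -> forall v, m V0 v = v)].

(* Lie(M); the existence of delta_x : F[M] -> F with
   delta_x (f_{phi v}) = phi (x_V v), where F[M] = {f_{phi v}} and
   f_{phi v}(m) = phi (m_V v), is the well-definedness of this assignment. *)
Definition inLieM (C : gmod -> Prop) du (x : family) : Prop :=
  [/\ Nat C du x,
      (forall (V W T : gmod) (b : V -> W -> T), C V -> C W -> C T -> is_tensor b ->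
          forall v w, x T (b v w) = b (x V v) w + b v (x W w)),
      (forall V0 : gmod, C V0 -> trivial1 V0 -> forall v, x V0 v = 0) &
      (forall (V W : gmod) (phi : V -> F) (v : V) (psi : W -> F) (w : W),
          C V -> C W -> du V phi -> du W psi ->
          (forall m, inM C du m -> phi (m V v) = psi (m W w)) ->
          phi (x V v) = psi (x W w))].

(* g is identified with the families (x_V)_V; good for integrating: g <= Lie(M) *)
Definition good_for_integrating (C : gmod -> Prop) du : Prop :=
  forall x : g, inLieM C du (fun V => @xV V x).

Inductive polyfun du (V : gmod) : (V -> F) -> Prop :=
  | pf_du phi : du V phi -> polyfun du phi
  | pf_cst (c : F) : polyfun du (fun _ => c)
  | pf_add f1 f2 : polyfun du f1 -> polyfun du f2 -> polyfun du (fun v => f1 v + f2 v)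
  | pf_mul f1 f2 : polyfun du f1 -> polyfun du f2 -> polyfun du (fun v => f1 v * f2 v).

Definition zariski_closed du (V : gmod) (U : V -> Prop) : Prop :=
  exists S : (V -> F) -> Prop, (forall f, S f -> polyfun du f) /\
    (forall v, U v <-> forall f, S f -> f v = 0).

Definition M_invariant (C : gmod -> Prop) du (V : gmod) (U : V -> Prop) : Prop :=
  forall m, inM C du m -> forall v, U v -> U (m V v).

End Defs.

(* Main.v *)
Require Import Defs.
From mathcomp Require Import all_boot all_order all_algebra.
From mathcomp Require Import ring.
From Stdlib Require Import Classical.
Import GRing.Theory.
Local Open Scope ring_scope.

Section Elim.
Variables (F : fieldType) (V : lmodType F) (D : (V -> F) -> Prop).
Hypothesis linD : forall phi, D phi -> linF phi.
Hypothesis closD : forall (a : F) phi psi, D phi -> D psi ->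
           D (fun v => a * phi v + psi v).
Variable U : V -> Prop.
Hypothesis subU : subspace U.
Variable w : V.
Hypothesis Kw : forall phi, D phi -> (forall u, U u -> phi u = 0) -> phi w = 0.

Fixpoint agree (l : seq (V -> F)) (a b : V) : Prop :=
  if l is phi :: l then phi a = phi b /\ agree l a b else True.
Fixpoint allD (l : seq (V -> F)) : Prop :=
  if l is phi :: l then D phi /\ allD l else True.

Lemma lin0 (phi : V -> F) : linF phi -> phi 0 = 0.
Proof.
move=> L; have := L 1 0 0; rewrite scale1r addr0 mul1r.
by move=> /(congr1 (fun t => t - phi 0)) /=; rewrite subrr addrK.
Qed.

Lemma linZ (phi : V -> F) a u : linF phi -> phi (a *: u) = a * phi u.
Proof. by move=> L; have := L a u 0; rewrite addr0 lin0 // addr0. Qed.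

Lemma U0 : U 0. Proof. by case: subU. Qed.
Lemma UZ a u : U u -> U (a *: u).
Proof. by move=> Uu; case: subU => _ H; have := H a u 0 Uu U0; rewrite addr0. Qed.
Lemma UD a u v : U u -> U v -> U (a *: u + v).
Proof. by case: subU => _ H; apply: H. Qed.

Lemma elim_main : forall l, allD l -> exists u, U u /\ agree l u w.
Proof.
move=> l0; have [n] : exists n, size l0 = n by exists (size l0).
elim: n l0 => [|n IHn] [|phi l] //= Hs.
  by move=> _; exists 0; split => //; case: subU.
move=> [Dphi Dl].
have IH : forall l', size l' = n -> allD l' -> exists u, U u /\ agree l' u w.
  by move=> l' Hl'; apply: IHn.
case: Hs => Hs.
have Lphi := linD _ Dphi.
case: (classic (exists u0, U u0 /\ phi u0 != 0)).
- move=> [u0 [Uu0 nz]].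
  set u1 := (phi u0)^-1 *: u0.
  have Uu1 : U u1 by apply: UZ.
  have p1 : phi u1 = 1 by rewrite /u1 linZ // mulVf.
  set l' := map (fun psi => fun v => - psi u1 * phi v + psi v) l.
  have Dl' : allD l'.
    rewrite /l'; clear l'; elim: l Dl {IH Hs} => //= psi l IHl [Dpsi Dl]; split; last exact: IHl.
    exact: closD.
  have Hs' : size l' = n by rewrite /l' size_map.
  have [u [Uu Ag]] := IH l' Hs' Dl'.
  exists ((phi w - phi u) *: u1 + u); split; first exact: UD.
  split; first by rewrite Lphi p1 mulr1 subrK.
  move: Ag; rewrite /l'; clear Hs' l' Dl'; elim: l Dl {IH Hs} => //= psi l IHl [Dpsi Dl] [E A].
  split; last exact: IHl.
  rewrite (linD _ Dpsi).
  have E' : psi u = psi w + psi u1 * phi u - psi u1 * phi w.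
    have H : psi u - (psi w + psi u1 * phi u - psi u1 * phi w) =
      (- psi u1 * phi u + psi u) - (- psi u1 * phi w + psi w) by ring.
    by move: H; rewrite E subrr => /eqP; rewrite subr_eq0 => /eqP.
  rewrite E'; ring.
- move=> Hn.
  have H0 : forall u, U u -> phi u = 0.
    move=> u Uu; apply: NNPP => ne; apply: Hn; exists u; split => //; exact/eqP.
  have [u [Uu Ag]] := IH l Hs Dl.
  exists u; split => //; split => //.
  by rewrite H0 // Kw.
Qed.

Lemma agree_cat l1 l2 a b : agree (l1 ++ l2) a b -> agree l1 a b /\ agree l2 a b.
Proof. by elim: l1 => //= phi l1 IH [E /IH [H1 H2]]. Qed.
Lemma allD_cat l1 l2 : allD l1 -> allD l2 -> allD (l1 ++ l2).
Proof. by elim: l1 => //= phi l1 IH [? ?] ?; split => //; apply: IH. Qed.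

End Elim.

Theorem theorem2p12 (F : fieldType) (charF0 : [pchar F] =i pred0)
  (g : LieAlg F) (C : gmod g -> Prop)
  (du : forall V : gmod g, (V -> F) -> Prop) :
  is_category C -> is_duals C du -> good_for_integrating C du ->
  forall V : gmod g, C V ->
  forall U : V -> Prop, subspace U -> M_invariant C du U -> zariski_closed du U ->
  forall (x : g) (v : V), U v -> U (gact x v).
Proof.
move=> _ Hdu Hgood V CV U subU MU [S [SP SU]] x v Uv.
have [[linD [D0 closD]] _ _ _ _] := Hdu V CV.
have Kw : forall phi, du V phi -> (forall u, U u -> phi u = 0) ->
    phi (gact x v) = 0.
  move=> phi Dphi H0.
  have [_ _ _ L4] := Hgood x.
  have := L4 V V phi v (fun _ => 0) v CV CV Dphi D0.
  by apply => m Mm; rewrite H0 //; apply: MU.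
have fin : forall f, polyfun du f -> exists l, @allD F V (du V) l /\
    forall a b, @agree F V l a b -> f a = f b.
  move=> f; elim.
  - by move=> phi Dphi; exists [:: phi] => /=; split => // a b [].
  - by move=> c; exists [::].
  - move=> f1 f2 _ [l1 [D1 A1]] _ [l2 [D2 A2]]; exists (l1 ++ l2).
    split; first exact: (@allD_cat F V (du V)).
    by move=> a b /(@agree_cat F V) [/A1 -> /A2 ->].
  - move=> f1 f2 _ [l1 [D1 A1]] _ [l2 [D2 A2]]; exists (l1 ++ l2).
    split; first exact: (@allD_cat F V (du V)).
    by move=> a b /(@agree_cat F V) [/A1 -> /A2 ->].
apply/SU => f Sf.
have [l [Dl Al]] := fin f (SP f Sf).
have [u [Uu Ag]] := @elim_main F V (du V) linD closD U subU (gact x v) Kw l Dl.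
rewrite -(Al _ _ Ag).
by move/SU: Uu; apply.
Qed.
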